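(* Let $G$ be a graph, $(\mathcal T,\{B_i\})$ a tree decomposition of $G$, $\{\mu_L\}$ a consistent family of distributions for it, and $f$ the output of SC-Round on these inputs. Let $e\notin V(G)$ be a new dummy vertex and let $(\mathcal T,\{B'_i\})$ with $B'_i=B_i\cup\{e\}$. Then there exists a consistent family $\{\mu'_{L'}\}$ for $(\mathcal T,\{B'_i\})$, indexed by $L'=L\cup\{e\}$, which is symmetric, i.e. $\Pr_{g\sim\mu'_{L'}}[g=g']=\Pr_{g\sim\mu'_{L'}}[g=\overline{g'}]$ for all $L'$-assignments $g'$, such that the output $f^*$ of SC-Round on $(\mathcal T,\{B'_i\})$ with $\{\mu'_{L'}\}$ satisfies, for every $V(G)$-assignment $f'$, $$\Pr[f=f']+\Pr[f=\overline{f'}] = \Pr[f^*|_{V(G)}=f']+\Pr[f^*|_{V(G)}=\overline{f'}].$$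
   Context: For a finite set $X$, an $X$-assignment is a map $X\to\{0,1\}$; its mirror is $\overline{g}=1-g$. Consistent family for a tree decomposition $(\mathcal T,\{B_i\})$ of $G$: for every set $L=B_i\cup\{s,t\}$ ($i\in V(\mathcal T)$, $s,t$ vertices) a distribution $\mu_L$ on $L$-assignments such that marginals of $\mu_L,\mu_{L'}$ agree on $L\cap L'$. SC-Round: choose a start node $i_0$, sample $f|_{B_{i_0}}\sim\mu_{B_{i_0}}$; process remaining nodes in non-decreasing distance from $i_0$; for node $i$ with already processed neighbour $j$, let $B^+=B_i\cap B_j$, $B^-=B_i\setminus B^+$, and sample $f|_{B^-}$ from $\mu_{B_i}$ conditioned on agreement with $f$ on $B^+$. Output $f$. *)

(* Defs.v *)
From mathcomp Require Import all_boot all_order all_algebra.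
Set Implicit Arguments. Unset Strict Implicit. Unset Printing Implicit Defensive.
Import Order.TTheory GRing.Theory Num.Theory.
Local Open Scope ring_scope.

Definition simple_graph (V : finType) (gE : rel V) : Prop :=
  symmetric gE /\ irreflexive gE.

Definition acyclic (T : finType) (tE : rel T) : Prop :=
  forall (x : T) (p : seq T),
    uniq (x :: p) -> (2 <= size p)%N -> path tE x p -> ~~ tE (last x p) x.

Definition is_tree (T : finType) (tE : rel T) : Prop :=
  [/\ (0 < #|T|)%N, simple_graph tE, (forall x y, connect tE x y) & acyclic tE].

Definition tree_decomp (V T : finType) (gE : rel V) (tE : rel T)
    (B : T -> {set V}) : Prop :=
  [/\ forall v, exists i, v \in B i,
      forall u v, gE u v -> exists i, (u \in B i) && (v \in B i)
    & forall v i j, v \in B i -> v \in B j ->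
        connect [rel x y | [&& tE x y, v \in B x & v \in B y]] i j].

(* An X-assignment (X : {set V}) is represented canonically by a total
   function V -> bool that is false outside X. *)
Definition restr (V : finType) (X : {set V}) (g : {ffun V -> bool}) :
  {ffun V -> bool} := [ffun x => (x \in X) && g x].

Definition is_assign (V : finType) (X : {set V}) (g : {ffun V -> bool}) : bool :=
  restr X g == g.

Definition mirrorL (V : finType) (X : {set V}) (g : {ffun V -> bool}) :
  {ffun V -> bool} := [ffun x => (x \in X) && ~~ g x].

Definition mirror (V : finType) (g : {ffun V -> bool}) : {ffun V -> bool} :=
  [ffun x => ~~ g x].

Definition is_distr (R : realFieldType) (V : finType) (X : {set V})
    (m : {ffun V -> bool} -> R) : Prop :=
  [/\ forall g, 0 <= m g,
      forall g, ~~ is_assign X g -> m g = 0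
    & \sum_g m g = 1].

Definition marg (R : realFieldType) (V : finType) (S : {set V})
    (m : {ffun V -> bool} -> R) (g : {ffun V -> bool}) : R :=
  \sum_(h | restr S h == g) m h.

(* index sets L = B_i \cup {s,t} (with {s,t} possibly empty, so that the
   bags B_i themselves are always indices) *)
Definition is_index (V T : finType) (B : T -> {set V}) (L : {set V}) : Prop :=
  exists i, L = B i \/ exists s t, L = B i :|: [set s; t].

Definition consistent_family (R : realFieldType) (V T : finType)
    (B : T -> {set V}) (mu : {set V} -> {ffun V -> bool} -> R) : Prop :=
  (forall L, is_index B L -> is_distr L (mu L)) /\
  (forall L L', is_index B L -> is_index B L' ->
     forall g, marg (L :&: L') (mu L) g = marg (L :&: L') (mu L') g).

Definition symmetric_family (R : realFieldType) (V T : finType)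
    (B : T -> {set V}) (mu : {set V} -> {ffun V -> bool} -> R) : Prop :=
  forall L, is_index B L ->
    forall g, is_assign L g -> mu L g = mu L (mirrorL L g).

Definition avoid (T : finType) (tE : rel T) (i : T) : rel T :=
  [rel x y | [&& tE x y, x != i & y != i]].

(* the neighbour of i on the path to the start node i0 (for i <> i0);
   this is the unique already-processed neighbour of i when nodes are
   processed in non-decreasing distance from i0 *)
Definition parent (T : finType) (tE : rel T) (i0 i : T) : T :=
  odflt i [pick j | tE i j && connect (avoid tE i) j i0].

(* Pr[ sampling f|B^- from mu_{B_i} conditioned on f|B^+ gives the values
   of f ], with B^+ = B_i \cap B_j, j the parent of i.  (Since f|B_i is
   determined by f|B^+ and f|B^-, this is mu_{B_i}(f|B_i)/marginal.)
   Zero if the conditioning event has probability zero. *)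
Definition sc_step (R : realFieldType) (V T : finType) (tE : rel T)
    (B : T -> {set V}) (mu : {set V} -> {ffun V -> bool} -> R)
    (i0 i : T) (f : {ffun V -> bool}) : R :=
  let S := B i :&: B (parent tE i0 i) in
  let d := marg S (mu (B i)) (restr S f) in
  if d == 0 then 0 else mu (B i) (restr (B i) f) / d.

(* Pr[ SC-Round started at i0 outputs f ] *)
Definition sc_prob (R : realFieldType) (V T : finType) (tE : rel T)
    (B : T -> {set V}) (mu : {set V} -> {ffun V -> bool} -> R)
    (i0 : T) (f : {ffun V -> bool}) : R :=
  mu (B i0) (restr (B i0) f) * \prod_(i | i != i0) sc_step tE B mu i0 i f.

Definition extB (V T : finType) (B : T -> {set V}) (i : T) : {set option V} :=
  (Some @: B i) :|: [set None].

Definition restrV (V : finType) (g : {ffun option V -> bool}) : {ffun V -> bool} :=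
  [ffun v => g (Some v)].

Definition sc_prob_restr (R : realFieldType) (V T : finType) (tE : rel T)
    (B' : T -> {set option V}) (mu' : {set option V} -> {ffun option V -> bool} -> R)
    (i0 : T) (f' : {ffun V -> bool}) : R :=
  \sum_(g | restrV g == f') sc_prob tE B' mu' i0 g.

(* Main.v *)
Require Import Defs.
From mathcomp Require Import all_boot all_order all_algebra.
From mathcomp.algebra_tactics Require Import ring lra.
Import Order.TTheory GRing.Theory Num.Theory.
Set Implicit Arguments. Unset Strict Implicit. Unset Printing Implicit Defensive.
Local Open Scope ring_scope.

Definition pre (V : finType) (L : {set option V}) : {set V} := [set v | Some v \in L].
Definition dec (V : finType) (X : {set V}) (g : {ffun option V -> bool}) : {ffun V -> bool} :=
  if g None then mirrorL X (restrV g) else restrV g.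
Definition muE (R : realFieldType) (V : finType) (mu : {set V} -> {ffun V -> bool} -> R)
  (L : {set option V}) (g : {ffun option V -> bool}) : R :=
  if is_assign L g then mu (pre L) (dec (pre L) g) / 2 else 0.
Definition ext (V : finType) (b : bool) (k : {ffun V -> bool}) : {ffun option V -> bool} :=
  [ffun o => if o is Some v then k v else b].
Definition Fg (V : finType) (g : {ffun option V -> bool}) : {ffun V -> bool} :=
  if g None then mirror (restrV g) else restrV g.
Definition mflip (V : finType) (X : {set V}) (k : {ffun V -> bool}) : {ffun V -> bool} :=
  [ffun v => if v \in X then ~~ k v else k v].

Lemma is_assignP (V : finType) (X : {set V}) (g : {ffun V -> bool}) :
  reflect (forall v, v \notin X -> g v = false) (is_assign X g).
Proof.
apply: (iffP eqP) => [H v Hv | H].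
  by rewrite -H ffunE (negbTE Hv).
apply/ffunP => v; rewrite ffunE; case: (boolP (v \in X)) => //= Hv.
by rewrite H.
Qed.

Lemma sum_ext (R : realFieldType) (V : finType) (F : {ffun option V -> bool} -> R) :
  \sum_g F g = \sum_(b : bool) \sum_(k : {ffun V -> bool}) F (ext b k).
Proof.
rewrite pair_big /=.
rewrite (reindex (fun p : bool * {ffun V -> bool} => ext p.1 p.2)) //.
exists (fun g : {ffun option V -> bool} => (g None, restrV g)) => [[b k] _ | g _] /=.
  by congr pair; [rewrite ffunE | apply/ffunP => v; rewrite !ffunE].
by apply/ffunP => -[v|]; rewrite !ffunE.
Qed.

Lemma ext_None (V : finType) b (k : {ffun V -> bool}) : ext b k None = b.
Proof. by rewrite ffunE. Qed.

Lemma restrV_ext (V : finType) b (k : {ffun V -> bool}) : restrV (ext b k) = k.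
Proof. by apply/ffunP => v; rewrite !ffunE. Qed.

Lemma restr_ext (V : finType) (X : {set option V}) b (k : {ffun V -> bool}) g :
  None \in X ->
  (restr X (ext b k) == g) = (b == g None) && (restr (pre X) k == restrV g).
Proof.
move=> HN; apply/eqP/andP => [H | [/eqP Hb /eqP H]].
  split; first by rewrite -H !ffunE HN.
  by apply/eqP/ffunP => v; rewrite -H !ffunE inE.
apply/ffunP => -[v|]; rewrite !ffunE.
  by have := congr1 (fun f : {ffun V -> bool} => f v) H; rewrite !ffunE inE.
by rewrite HN.
Qed.

Lemma assign_ext (V : finType) (X : {set option V}) b (k : {ffun V -> bool}) :
  None \in X -> is_assign X (ext b k) = is_assign (pre X) k.
Proof.
move=> HN; apply/is_assignP/is_assignP => H v Hv.
  by have := H (Some v); rewrite ffunE; apply; rewrite inE in Hv.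
case: v Hv => [v|] Hv; last by rewrite HN in Hv.
by rewrite ffunE H // inE.
Qed.

Lemma mflip_assign (V : finType) (X : {set V}) k :
  is_assign X (mflip X k) = is_assign X k.
Proof.
apply/is_assignP/is_assignP => H v Hv; have := H v Hv; rewrite ffunE (negbTE Hv) //.
Qed.

Lemma mflipK (V : finType) (X : {set V}) : involutive (mflip X).
Proof. by move=> k; apply/ffunP => v; rewrite !ffunE; case: (v \in X); rewrite ?negbK. Qed.

Lemma mflip_mirror (V : finType) (X : {set V}) k :
  is_assign X k -> mflip X k = mirrorL X k.
Proof.
move/is_assignP => H; apply/ffunP => v; rewrite !ffunE.
by case: (boolP (v \in X)) => // Hv; rewrite H.
Qed.

Lemma pre_sub (V : finType) (X L : {set option V}) : X \subset L -> pre X \subset pre L.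
Proof. by move/subsetP => H; apply/subsetP => v; rewrite !inE => /H. Qed.

Lemma mirror_eq (V : finType) (X L : {set V}) k rg :
  X \subset L -> is_assign X rg ->
  (restr X (mirrorL L k) == mirrorL X rg) = (restr X k == rg).
Proof.
move=> /subsetP HXL /is_assignP Hrg.
apply/eqP/eqP => H; apply/ffunP => v;
  have := congr1 (fun f : {ffun V -> bool} => f v) H; rewrite !ffunE;
  (case: (boolP (v \in X)) => Hv /=; [rewrite (HXL v Hv) | rewrite (Hrg v Hv)]) => //=.
all: by case: (k v); case: (rg v).
Qed.

Lemma marg_muE (R : realFieldType) (V : finType) (mu : {set V} -> {ffun V -> bool} -> R)
    (L' X' : {set option V}) g :
  None \in X' -> X' \subset L' -> is_distr (pre L') (mu (pre L')) -> is_assign X' g ->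
  marg X' (muE mu L') g = marg (pre X') (mu (pre L')) (dec (pre X') g) / 2.
Proof.
move=> HN HXL [_ H0 _] Hg.
have HNL : None \in L' by move/subsetP: HXL; apply.
have HXL2 := pre_sub HXL.
have Hrg : is_assign (pre X') (restrV g).
  apply/is_assignP => v; rewrite inE => Hv.
  by move/is_assignP: Hg => /(_ _ Hv); rewrite ffunE.
rewrite /marg big_mkcond sum_ext big_bool /=.
under eq_bigr do rewrite restr_ext // /muE assign_ext // /dec ext_None restrV_ext.
under [X in _ + X]eq_bigr do rewrite restr_ext // /muE assign_ext // /dec ext_None restrV_ext.
rewrite /dec big_distrl /=.
case E: (g None) => /=.
- rewrite big1_eq addr0 [RHS]big_mkcond /=.
  rewrite [RHS](reindex_inj (inv_inj (mflipK (pre L')))).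
  apply: eq_bigr => k _.
  case: (boolP (is_assign (pre L') k)) => Hk.
    by rewrite mflip_mirror // mirror_eq //; case: ifP.
  by rewrite H0 ?mflip_assign // mul0r !if_same.
- rewrite big1_eq add0r [RHS]big_mkcond /=.
  apply: eq_bigr => k _.
  case: (boolP (is_assign (pre L') k)) => Hk.
    by case: ifP.
  by rewrite H0 // mul0r !if_same.
Qed.

Lemma pre_extB (V T : finType) (B : T -> {set V}) i : pre (extB B i) = B i.
Proof.
apply/setP => v; rewrite !inE (mem_imset _ _ (@Some_inj _)).
by rewrite orbF.
Qed.

Lemma None_extB (V T : finType) (B : T -> {set V}) i : None \in extB B i.
Proof. by rewrite !inE orbT. Qed.

Lemma pre_index (V T : finType) (B : T -> {set V}) (L : {set option V}) :
  is_index (extB B) L -> is_index B (pre L) /\ None \in L.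
Proof.
move=> [i [->|[s [t ->]]]]; first by split; [exists i; left; rewrite pre_extB | exact: None_extB].
split; last by rewrite inE None_extB.
exists i.
have E : pre (extB B i :|: [set s; t]) = B i :|: pre [set s; t].
  apply/setP => v; rewrite !inE (mem_imset _ _ (@Some_inj _)) /=.
  by rewrite -[Some v == None]/false orbF.
rewrite E; clear E.
have SN : forall v : V, (Some v == None) = false by [].
have SS : forall v a : V, (Some v == Some a) = (v == a) by move=> v a; apply: inj_eq; exact: Some_inj.
case: s => [a|]; case: t => [b|].
- by right; exists a, b; f_equal; apply/setP => v; rewrite !inE !SS.
- by right; exists a, a; f_equal; apply/setP => v; rewrite !inE SS SN orbb orbF.
- by right; exists b, b; f_equal; apply/setP => v; rewrite !inE SS SN orbb.
- by left; apply/setP => v; rewrite !inE SN !orbF.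
Qed.

Lemma muE_ext_dummy : True. Proof. by []. Qed.
Lemma muE_ext (R : realFieldType) (V : finType) (mu : {set V} -> {ffun V -> bool} -> R)
    (L' : {set option V}) b k :
  None \in L' ->
  muE mu L' (ext b k) =
  if is_assign (pre L') k then mu (pre L') (if b then mirrorL (pre L') k else k) / 2 else 0.
Proof. by move=> HN; rewrite /muE assign_ext // /dec ext_None restrV_ext. Qed.

Lemma distr_muE (R : realFieldType) (V : finType) (mu : {set V} -> {ffun V -> bool} -> R)
    (L' : {set option V}) :
  None \in L' -> is_distr (pre L') (mu (pre L')) -> is_distr L' (muE mu L').
Proof.
move=> HN [Hp H0 H1]; split.
- move=> g; rewrite /muE; case: ifP => // _.
  by apply: divr_ge0 => //; apply: ler0n.
- by move=> g Hg; rewrite /muE (negbTE Hg).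
rewrite sum_ext big_bool /=.
under eq_bigr do rewrite muE_ext //.
under [X in _ + X]eq_bigr do rewrite muE_ext //.
have E : \sum_k (if is_assign (pre L') k then mu (pre L') k / 2 else 0) = 2^-1.
  rewrite -[X in _ = X]mul1r -H1 big_distrl /=; apply: eq_bigr => k _.
  by case: ifP => // /negbT Hk; rewrite H0 // mul0r.
have Et : \sum_k (if is_assign (pre L') k then mu (pre L') (mirrorL (pre L') k) / 2 else 0) = 2^-1.
  apply: etrans E; rewrite (reindex_inj (inv_inj (mflipK (pre L')))) /=.
  apply: eq_bigr => k _; rewrite mflip_assign.
  by case: ifP => // Hk; rewrite -mflip_mirror ?mflipK // mflip_assign.
by rewrite Et E [RHS](splitr 1) mul1r.
Qed.

Lemma restr_assign (V : finType) (X : {set V}) g : is_assign X (restr X g).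
Proof. by apply/is_assignP => v Hv; rewrite ffunE (negbTE Hv). Qed.

Lemma mirrorL_assign (V : finType) (X : {set V}) g : is_assign X (mirrorL X g).
Proof. by apply/is_assignP => v Hv; rewrite ffunE (negbTE Hv). Qed.

Lemma pre_setI (V : finType) (A C : {set option V}) : pre (A :&: C) = pre A :&: pre C.
Proof. by apply/setP => v; rewrite !inE. Qed.

Lemma marg_nonassign (R : realFieldType) (V : finType) (S : {set V}) (m : {ffun V -> bool} -> R) g :
  ~~ is_assign S g -> marg S m g = 0.
Proof.
move=> Hg; rewrite /marg big_pred0 // => h; apply/negP => /eqP E.
by move: Hg; rewrite -E restr_assign.
Qed.

Lemma cons_muE (R : realFieldType) (V T : finType) (B : T -> {set V})
    (mu : {set V} -> {ffun V -> bool} -> R) :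
  consistent_family B mu -> consistent_family (extB B) (muE mu).
Proof.
move=> [Hd Hc]; split.
  by move=> L /pre_index [Hi HN]; apply: distr_muE => //; apply: Hd.
move=> L1 L2 /pre_index [H1 N1] /pre_index [H2 N2] g.
case: (boolP (is_assign (L1 :&: L2) g)) => Hg; last by rewrite !marg_nonassign.
have NI : None \in L1 :&: L2 by rewrite inE N1 N2.
rewrite !marg_muE ?subsetIl ?subsetIr //; try apply: Hd => //.
by rewrite pre_setI Hc.
Qed.

Lemma sym_muE (R : realFieldType) (V T : finType) (B : T -> {set V})
    (mu : {set V} -> {ffun V -> bool} -> R) :
  symmetric_family (extB B) (muE mu).
Proof.
move=> L /pre_index [_ HN] g Hg.
rewrite /muE Hg mirrorL_assign; congr (mu _ _ / 2).
have Hr : is_assign (pre L) (restrV g).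
  apply/is_assignP => v; rewrite inE => Hv.
  by move/is_assignP: Hg => /(_ _ Hv); rewrite ffunE.
have E1 : (mirrorL L g) None = ~~ g None by rewrite ffunE HN.
have E2 : restrV (mirrorL L g) = mirrorL (pre L) (restrV g).
  by apply/ffunP => v; rewrite !ffunE inE.
rewrite /dec E1 E2; case: (g None) => //=.
apply/ffunP => v; rewrite !ffunE.
case: (boolP (v \in pre L)) => Hv //=; [by rewrite negbK | idtac].
by move/is_assignP: Hr => /(_ v Hv); rewrite ffunE.
Qed.

Lemma dec_restr (V : finType) (X : {set option V}) g :
  None \in X -> dec (pre X) (restr X g) = restr (pre X) (Fg g).
Proof.
move=> HN; rewrite /dec /Fg ffunE HN /=.
by case: (g None); apply/ffunP => v; rewrite !ffunE inE //; case: (Some v \in X).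
Qed.

Lemma step_muE (R : realFieldType) (V T : finType) (tE : rel T) (B : T -> {set V})
    (mu : {set V} -> {ffun V -> bool} -> R) i1 i g :
  is_distr (B i) (mu (B i)) ->
  sc_step tE (extB B) (muE mu) i1 i g = sc_step tE B mu i1 i (Fg g).
Proof.
move=> Hd; rewrite /sc_step.
set S := extB B i :&: extB B (parent tE i1 i).
have NS : None \in S by rewrite inE !None_extB.
rewrite marg_muE ?subsetIl ?restr_assign ?pre_extB //.
rewrite /muE restr_assign !dec_restr ?None_extB // pre_setI !pre_extB.
set d := marg _ _ _; set x := mu _ _.
have -> : (d / 2 == 0) = (d == 0).
  by rewrite mulf_eq0 invr_eq0 pnatr_eq0 orbF.
case: eqP => // Hd0; field.
by apply/eqP.
Qed.
Lemma avoid_all (T : finType) (tE : rel T) (i k : T) (p : seq T) :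
  path (avoid tE i) k p -> all (fun x => x != i) p.
Proof.
elim: p k => [|y p IH] k //= /andP[/and3P[_ _ Hy] Hp].
by rewrite Hy (IH _ Hp).
Qed.

Lemma parent_adj (T : finType) (tE : rel T) (i r : T) :
  is_tree tE -> tE i r -> parent tE r i = r.
Proof.
case=> _ [sym irr] _ acyc Hir.
rewrite /parent; case: pickP => [k /andP[Hik Hc]|H]; last first.
  by move: (H r); rewrite Hir connect0.
apply/eqP; apply/negPn/negP => Hkr.
move/connectP: Hc => [p0 Hp0 Hl].
move: Hir Hkr; rewrite Hl; case: (shortenP Hp0) => p Hp Hu _ Hir Hkr.
have Hki : k != i by apply/negP => /eqP Ek; move: Hik; rewrite Ek irr.
case: p Hp Hu Hkr Hir => [|y p] Hp Hu Hkr Hir; first by rewrite /= eqxx in Hkr.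
have Hall := avoid_all Hp.
have Hpt : path tE k (y :: p).
  by apply: sub_path Hp => a b /and3P[].
move: Hu; rewrite /= => /andP[Hk Hu].
move: Hall => /= /andP[Hyi Hall].
have Hnin : i \notin k :: y :: p.
  rewrite !inE negb_or (eq_sym i k) Hki negb_or (eq_sym i y) Hyi /=.
  by apply/negP => Hin; move/allP: Hall => /(_ _ Hin); rewrite eqxx.
have := acyc i (k :: y :: p).
move: Hu Hk Hnin Hpt; rewrite /= => -> -> -> ->.
rewrite Hik => /(_ isT isT isT) /negP; apply.
by rewrite sym.
Qed.

Lemma parent_other (T : finType) (tE : rel T) (i0 j i : T) :
  symmetric tE -> tE i0 j -> i != i0 -> i != j -> parent tE i0 i = parent tE j i.
Proof.
move=> sym Hij Hi0 Hj; rewrite /parent; congr odflt; apply: eq_pick => k.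
congr andb.
have H1 : connect (avoid tE i) i0 j by apply: connect1; apply/and3P; split; rewrite // eq_sym.
have H2 : connect (avoid tE i) j i0 by apply: connect1; apply/and3P; split; [by rewrite sym | by rewrite eq_sym | by rewrite eq_sym].
apply/idP/idP => H; [exact: connect_trans H H1 | exact: connect_trans H H2].
Qed.

Lemma root_step (R : realFieldType) (V T : finType) (tE : rel T)
    (B : T -> {set V}) (mu : {set V} -> {ffun V -> bool} -> R) (i0 j : T) f :
  is_tree tE -> consistent_family B mu -> tE i0 j ->
  sc_prob tE B mu i0 f = sc_prob tE B mu j f.
Proof.
move=> Ht [_ Hc] Hij.
have [_ [sym irr] _ _] := Ht.
have Hne : j != i0 by apply/eqP => E; move: Hij; rewrite E irr.
rewrite /sc_prob (bigD1 j Hne) (bigD1 i0 (negbT (introF eqP (fun E => (negP Hne) (introT eqP (esym E)))))) /=.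
have -> : \prod_(i | (i != i0) && (i != j)) sc_step tE B mu i0 i f
        = \prod_(i | (i != j) && (i != i0)) sc_step tE B mu j i f.
  rewrite (eq_bigl (fun i => (i != j) && (i != i0))); last by move=> i; rewrite andbC.
  apply: eq_bigr => i /andP[H1 H2].
  by rewrite /sc_step (parent_other sym Hij H2 H1).
have P1 : parent tE i0 j = i0 by apply: parent_adj => //; rewrite sym.
have P2 : parent tE j i0 = j by apply: parent_adj.
rewrite /sc_step P1 P2 setIC.
rewrite (Hc (B i0) (B j)); try by exists i0; left. 2: by exists j; left.
rewrite setIC.
set d := marg _ _ _.
case: eqP => _; first by rewrite !mul0r !mulr0.
rewrite !mulrA; congr (_ * _); congr (_ * _).
by rewrite mulrC.
Qed.

Lemma root_indep (R : realFieldType) (V T : finType) (tE : rel T)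
    (B : T -> {set V}) (mu : {set V} -> {ffun V -> bool} -> R) (i0 i1 : T) f :
  is_tree tE -> consistent_family B mu ->
  sc_prob tE B mu i0 f = sc_prob tE B mu i1 f.
Proof.
move=> Ht Hc; have [_ _ Hconn _] := Ht.
move/connectP: (Hconn i0 i1) => [p Hp ->].
elim: p i0 Hp => [|y p IH] i0 //= /andP[H1 H2].
by rewrite (root_step _ Ht Hc H1) IH.
Qed.

Lemma prob_muE (R : realFieldType) (V T : finType) (tE : rel T) (B : T -> {set V})
    (mu : {set V} -> {ffun V -> bool} -> R) i1 g :
  consistent_family B mu ->
  sc_prob tE (extB B) (muE mu) i1 g = sc_prob tE B mu i1 (Fg g) / 2.
Proof.
move=> [Hd _]; rewrite /sc_prob.
rewrite [X in X * _]/muE restr_assign dec_restr ?None_extB // pre_extB.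
rewrite mulrAC; congr (_ * _ * _); apply: eq_bigr => i _.
by apply: step_muE; apply: Hd; exists i; left.
Qed.

Lemma mirrorK (V : finType) (f : {ffun V -> bool}) : mirror (mirror f) = f.
Proof. by apply/ffunP => v; rewrite !ffunE negbK. Qed.

Lemma restr_muE (R : realFieldType) (V T : finType) (tE : rel T) (B : T -> {set V})
    (mu : {set V} -> {ffun V -> bool} -> R) i1 f :
  consistent_family B mu ->
  sc_prob_restr tE (extB B) (muE mu) i1 f
  = sc_prob tE B mu i1 (mirror f) / 2 + sc_prob tE B mu i1 f / 2.
Proof.
move=> Hc; rewrite /sc_prob_restr big_mkcond sum_ext big_bool /=.
under eq_bigr do rewrite restrV_ext prob_muE //.
under [X in _ + X]eq_bigr do rewrite restrV_ext prob_muE //.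
rewrite -!big_mkcond !big_pred1_eq /Fg !ext_None !restrV_ext.
by [].
Qed.

Theorem lemmaA2 (R : realFieldType) (V T : finType) (gE : rel V) (tE : rel T)
    (B : T -> {set V}) (mu : {set V} -> {ffun V -> bool} -> R) :
  simple_graph gE -> is_tree tE -> tree_decomp gE tE B ->
  consistent_family B mu ->
  exists mu' : {set option V} -> {ffun option V -> bool} -> R,
    [/\ consistent_family (extB B) mu',
        symmetric_family (extB B) mu'
      & forall (i0 i1 : T) (f' : {ffun V -> bool}),
          sc_prob tE B mu i0 f' + sc_prob tE B mu i0 (mirror f')
          = sc_prob_restr tE (extB B) mu' i1 f'
            + sc_prob_restr tE (extB B) mu' i1 (mirror f')].
Proof.
move=> _ Ht _ Hc; exists (muE mu); split.
- exact: cons_muE.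
- exact: sym_muE.
move=> i0 i1 f.
rewrite !restr_muE // mirrorK !(root_indep i0 i1 _ Ht Hc).
lra.
Qed.
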